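(* Let $p, q$ be distinct primes and $n = pq$. Then the zero-divisor graph $\Gamma(\mathbb{Z}_n)$ is a very cost effective graph.
   Context: $\mathbb{Z}_n$ is the ring of residue classes modulo $n$. The zero-divisor graph $\Gamma(\mathbb{Z}_n)$ has as vertices the nonzero zero-divisors of $\mathbb{Z}_n$, two distinct vertices being adjacent iff their product is $0$. For a graph $G=(V,E)$ and $S\subseteq V$, a vertex $v\in S$ is very cost effective if $|N(v)\cap S| < |N(v)\cap (V\setminus S)|$, where $N(v)$ is the open neighborhood of $v$; $S$ is very cost effective if every vertex of $S$ is. A bipartition $\{S, V\setminus S\}$ is very cost effective if both parts are very cost effective sets, and $G$ is very cost effective if it has a very cost effective bipartition. *)

(* Defs.v *)
From mathcomp Require Import all_boot.
Set Implicit Arguments. Unset Strict Implicit. Unset Printing Implicit Defensive.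

(* A simple graph given by a vertex set V inside a finite type T and an
   adjacency relation adj (only used between distinct vertices of V). *)

Definition nbhd (T : finType) (V : {set T}) (adj : rel T) (v : T) : {set T} :=
  [set u in V | (u != v) && adj v u].

Definition vce_vertex (T : finType) (V : {set T}) (adj : rel T)
  (S : {set T}) (v : T) : bool :=
  #|nbhd V adj v :&: S| < #|nbhd V adj v :&: (V :\: S)|.

Definition vce_set (T : finType) (V : {set T}) (adj : rel T) (S : {set T}) : bool :=
  [forall v in S, vce_vertex V adj S v].

Definition vce_bipartition (T : finType) (V : {set T}) (adj : rel T)
  (S : {set T}) : bool :=
  [&& S \subset V, vce_set V adj S & vce_set V adj (V :\: S)].

Definition vce_graph (T : finType) (V : {set T}) (adj : rel T) : Prop :=
  exists S : {set T}, vce_bipartition V adj S.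

Definition zd_mul0 (n : nat) (x y : 'I_n) : bool := (x * y) %% n == 0.

Definition zd_vertices (n : nat) : {set 'I_n} :=
  [set x : 'I_n | (val x != 0) && [exists y : 'I_n, (val y != 0) && zd_mul0 x y]].

Definition zd_adj (n : nat) : rel 'I_n := fun x y => (x != y) && zd_mul0 x y.

Definition zero_divisor_graph_vce (n : nat) : Prop :=
  vce_graph (zd_vertices n) (@zd_adj n).

(* Main.v *)
Require Import Defs.
From mathcomp Require Import all_boot.

Theorem mainTheorem2 (p q : nat) :
  prime p -> prime q -> p != q -> zero_divisor_graph_vce (p * q).
Proof.
move=> pp pq npq.
have p1 : 1 < p by apply: prime_gt1.
have q1 : 1 < q by apply: prime_gt1.
have cpq : coprime p q by rewrite prime_coprime // dvdn_prime2.
have dvM : forall m, (p * q %| m) = (p %| m) && (q %| m) by move=> m; rewrite Gauss_dvd.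
have F1 : forall x : 'I_(p * q), val x != 0 -> ~~ ((p %| x) && (q %| x)).
  move=> x x0; rewrite -dvM; apply/negP => /dvdn_leq.
  rewrite lt0n x0 => /(_ isT); rewrite leqNgt ltn_ord.
  done.
have npq' : ~~ (p %| q) by rewrite dvdn_prime2 // npq.
have nqp : ~~ (q %| p) by rewrite dvdn_prime2 // eq_sym npq.
have hq : q < p * q by rewrite ltn_Pmull // ltnW.
have hp : p < p * q by rewrite ltn_Pmulr // ltnW.
pose oq := Ordinal hq. pose op := Ordinal hp.
have mul0E : forall x y : 'I_(p*q), zd_mul0 x y = (p %| x * y) && (q %| x * y).
  by move=> x y; rewrite /zd_mul0 -dvM.
have Vchar : forall x : 'I_(p*q), (x \in zd_vertices (p*q)) = (val x != 0) && ((p %| x) || (q %| x)).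
  move=> x; rewrite inE; case x0: (val x != 0) => //=.
  apply/existsP/idP.
    case=> y /andP[y0]; rewrite mul0E !Euclid_dvdM // => /andP[/orP[->//|py] /orP[->|qy]].
      by rewrite orbT.
    by have := F1 y y0; rewrite py qy.
  case/orP => h.
    exists oq; rewrite /= -lt0n prime_gt0 //= mul0E !Euclid_dvdM // h dvdnn orbT.
    done.
  exists op; rewrite /= -lt0n prime_gt0 //= mul0E !Euclid_dvdM // h dvdnn orbT.
  done.
have Vdef : zd_vertices (p*q) = [set x : 'I_(p*q) | (val x != 0) && ((p %| x) || (q %| x))].
  by apply/setP => x; rewrite Vchar inE.
exists [set x : 'I_(p*q) | (val x != 0) && (p %| x)].
rewrite /vce_bipartition /vce_set /vce_vertex /nbhd Vdef.
apply/and3P; split.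
- apply/subsetP => x; rewrite !inE => /andP[-> ->] //.
- apply/forallP => v; apply/implyP; rewrite inE => /andP[v0 pv].
  have -> : [set u in [set x : 'I_(p*q) | (val x != 0) && ((p %| x) || (q %| x))] | (u != v) && zd_adj v u] :&: [set x : 'I_(p*q) | (val x != 0) && (p %| x)] = set0.
    apply/setP => u; rewrite !inE /zd_adj mul0E.
    apply/negP => /andP[/andP[_ /andP[_ /andP[_ /andP[_ h]]]] /andP[u0 pu]].
    move: h; rewrite Euclid_dvdM // => /orP[qv|qu].
      by have := F1 v v0; rewrite pv qv.
    by have := F1 u u0; rewrite pu qu.
  rewrite cards0 card_gt0; apply/set0Pn; exists oq.
  rewrite !inE /= -lt0n prime_gt0 //= dvdnn orbT npq' /=.
  have vq : v != oq by apply/negP => /eqP vq; move: pv; rewrite vq /= (negbTE npq').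
  rewrite eq_sym vq /zd_adj vq mul0E /= dvdn_mulr // dvdn_mull //.
- apply/forallP => v; apply/implyP; rewrite !inE => /andP[nS /andP[v0 pqv]].
  move: nS; rewrite v0 /= => npv.
  have qv : q %| v by move: pqv; rewrite (negbTE npv).
  set S := [set x : 'I_(p*q) | (val x != 0) && (p %| x)].
  have -> : [set u in [set x : 'I_(p*q) | (val x != 0) && ((p %| x) || (q %| x))] | (u != v) && zd_adj v u] :&: ([set x : 'I_(p*q) | (val x != 0) && ((p %| x) || (q %| x))] :\: S) = set0.
    apply/setP => u; rewrite !inE /zd_adj mul0E.
    apply/negP => /andP[/andP[_ /andP[_ /andP[_ /andP[h _]]]] /andP[nS /andP[u0 _]]].
    move: nS; rewrite u0 /= => npu.
    by move: h; rewrite Euclid_dvdM // (negbTE npv) (negbTE npu).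
  rewrite cards0 card_gt0; apply/set0Pn; exists op.
  rewrite !inE /= -lt0n prime_gt0 //= dvdnn /=.
  have vp : v != op by apply/negP => /eqP vp; move: npv; rewrite vp /= dvdnn.
  rewrite eq_sym vp /zd_adj vp mul0E /= dvdn_mull // dvdn_mulr //.
Qed.
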